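(* Let $X$ be a $T_1$ space and $\mathcal{P}$ an ideal of closed subsets of $X$. Then $X$ is $\tau\mathcal{P}$-compact if and only if $X$ is both $\tau\mathcal{P}$-pseudocompact and $\tau\mathcal{P}$-real compact.
   Context: An ideal of closed subsets of $X$ is a family $\mathcal{P}$ of closed subsets closed under finite unions and under passing to closed subsets. $D_f$ is the set of discontinuity points of $f\in\mathbb{R}^X$; $C(X)_\mathcal{P}=\{f\in\mathbb{R}^X\colon\overline{D_f}\in\mathcal{P}\}$ (a ring under pointwise operations), $C^*(X)_\mathcal{P}$ its bounded members. For $f\in C(X)_\mathcal{P}$, $Z_\mathcal{P}(f)=\{x\colon f(x)=0\}$, $Z_\mathcal{P}[X]$ the set of all such sets, and for $I\subseteq C(X)_\mathcal{P}$, $Z_\mathcal{P}[I]=\{Z_\mathcal{P}(f)\colon f\in I\}$. $X$ is $\tau\mathcal{P}$-compact if every subfamily of $Z_\mathcal{P}[X]$ with the finite intersection property has nonempty intersection; $\tau\mathcal{P}$-pseudocompact if $C(X)_\mathcal{P}=C^*(X)_\mathcal{P}$. A maximal ideal $M$ of $C(X)_\mathcal{P}$ is real if $C(X)_\mathcal{P}/M$ is isomorphic to $\mathbb{R}$; an ideal $I$ is fixed if $\bigcap Z_\mathcal{P}[I]\neq\emptyset$. $X$ is $\tau\mathcal{P}$-real compact if every real maximal ideal of $C(X)_\mathcal{P}$ is fixed. *)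

(* Defs.v *)
From HB Require Import structures.
From mathcomp Require Import all_boot all_order all_algebra.
From mathcomp Require Import all_classical all_reals all_analysis.
From mathcomp Require Import Rstruct Rstruct_topology.
From Stdlib Require Import Rdefinitions.
Set Implicit Arguments. Unset Strict Implicit. Unset Printing Implicit Defensive.
Import Order.TTheory GRing.Theory Num.Theory.
Import numFieldNormedType.Exports.
Local Open Scope classical_set_scope.
Local Open Scope ring_scope.

Notation RR := Rdefinitions.R.

Section Defs.
Variable X : topologicalType.

Definition closed_ideal (P : set (set X)) : Prop :=
  [/\ (forall A, P A -> closed A),
      P set0,
      (forall A B, P A -> P B -> P (A `|` B)) &
      (forall A B, P A -> closed B -> B `<=` A -> P B)].

Definition discont (f : X -> RR) : set X := [set x | ~ {for x, continuous f}].

Definition CP (P : set (set X)) : set (X -> RR) :=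
  [set f | P (closure (discont f))].

Definition CPstar (P : set (set X)) : set (X -> RR) :=
  [set f | CP P f /\ exists M : RR, forall x, `|f x| <= M].

Definition ZP (f : X -> RR) : set X := [set x | f x = 0].

Definition ZPX (P : set (set X)) : set (set X) := [set ZP f | f in CP P].

Definition ZPI (I : set (X -> RR)) : set (set X) := [set ZP f | f in I].

Definition fip (F : set (set X)) : Prop :=
  forall G : set (set X), finite_set G -> G `<=` F -> \bigcap_(A in G) A !=set0.

Definition tauP_compact (P : set (set X)) : Prop :=
  forall F : set (set X), F `<=` ZPX P -> fip F -> \bigcap_(A in F) A !=set0.

Definition tauP_pseudocompact (P : set (set X)) : Prop := CP P = CPstar P.

Definition ring_ideal (P : set (set X)) (I : set (X -> RR)) : Prop :=
  [/\ I `<=` CP P,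
      I (fun _ => 0),
      (forall f g, I f -> I g -> I (f \- g)) &
      (forall f g, CP P g -> I f -> I (g \* f))].

Definition maximal_ideal (P : set (set X)) (M : set (X -> RR)) : Prop :=
  [/\ ring_ideal P M, M <> CP P &
      forall J, ring_ideal P J -> M `<=` J -> J = M \/ J = CP P].

(* C(X)_P / M is isomorphic to R, written on representatives: a map phi from
   C(X)_P to R which is a unital ring morphism, onto, and whose fibres are
   exactly the cosets of M (so it induces a well-defined bijective ring
   morphism C(X)_P / M -> R). *)
Definition real_maximal_ideal (P : set (set X)) (M : set (X -> RR)) : Prop :=
  maximal_ideal P M /\
  exists phi : (X -> RR) -> RR,
    [/\ (forall f g, CP P f -> CP P g -> phi (f \+ g) = phi f + phi g),
        (forall f g, CP P f -> CP P g -> phi (f \* g) = phi f * phi g),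
        phi (fun _ => 1) = 1,
        (forall r : RR, exists2 f, CP P f & phi f = r) &
        (forall f g, CP P f -> CP P g -> (M (f \- g) <-> phi f = phi g))].

Definition fixed_ideal (I : set (X -> RR)) : Prop :=
  \bigcap_(A in ZPI I) A !=set0.

Definition tauP_realcompact (P : set (set X)) : Prop :=
  forall M, real_maximal_ideal P M -> fixed_ideal M.

End Defs.

(* Main.v *)
Require Import Defs.
From mathcomp Require Import all_boot all_order all_algebra.
From mathcomp Require Import all_classical all_reals all_analysis.
From mathcomp Require Import Rstruct Rstruct_topology.
Set Implicit Arguments. Unset Strict Implicit. Unset Printing Implicit Defensive.
Import Order.TTheory GRing.Theory Num.Theory.
Import numFieldNormedType.Exports.
Local Open Scope classical_set_scope.
Local Open Scope ring_scope.

Lemma fin_closed (T : Type) (Q : set T -> Prop) (G : set (set T)) :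
  Q setT -> (forall A B, Q A -> Q B -> Q (A `&` B)) -> finite_set G ->
  G `<=` Q -> Q (\bigcap_(A in G) A).
Proof.
move=> QT QI /finite_fsetP [F ->] GQ; rewrite bigcap_fset.
have : forall A, A \in finmap.enum_fset F -> Q A by move=> A HA; apply: GQ.
elim: (finmap.enum_fset F) => [|a s IH] H; rewrite ?big_nil ?big_cons //.
apply: QI; first by apply: H; rewrite mem_head.
by apply: IH => A HA; apply: H; rewrite in_cons HA orbT.
Qed.

Lemma sq_sum0 (a b : RR) : (a * a + b * b = 0) <-> (a = 0 /\ b = 0).
Proof.
split => [/eqP|[-> ->]]; last by rewrite mulr0 addr0.
rewrite paddr_eq0 ?mulf_eq0 ?orbb -?expr2 ?sqr_ge0 //.
by case/andP => /eqP -> /eqP ->.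
Qed.

Section Aux.
Variable X : topologicalType.
Implicit Types f g h : X -> RR.

Lemma discontB f g : discont (f \- g) `<=` discont f `|` discont g.
Proof.
move=> x H; case: (pselect ({for x, continuous f})) => Hf; last by left.
case: (pselect ({for x, continuous g})) => Hg; last by right.
have Hc : {for x, continuous (f \- g)}.
  by move: Hf Hg; rewrite /prop_for /continuous_at => Hf Hg; exact: (@cvgB RR RR^o _ _ _ f g _ _ Hf Hg).
by case: (H Hc).
Qed.

Lemma discontM f g : discont (f \* g) `<=` discont f `|` discont g.
Proof.
move=> x H; case: (pselect ({for x, continuous f})) => Hf; last by left.
case: (pselect ({for x, continuous g})) => Hg; last by right.
have Hc : {for x, continuous (f \* g)}.
  by move: Hf Hg; rewrite /prop_for /continuous_at => Hf Hg; exact: (@cvgM RR _ _ _ f g _ _ Hf Hg).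
by case: (H Hc).
Qed.

Lemma discontV g : (forall x, g x != 0) -> discont (fun x => (g x)^-1) `<=` discont g.
Proof.
move=> gn0 x H Hg; apply: H; move: Hg; rewrite /prop_for /continuous_at => Hg.
exact: (@cvgV RR _ _ _ g _ (gn0 x) Hg).
Qed.

Lemma discont_cst (c : RR) : discont (fun _ : X => c) = set0.
Proof.
apply/seteqP; split => x //= H; apply: H; exact: cvg_cst.
Qed.

Variable P : set (set X).
Hypothesis HP : closed_ideal P.

Lemma CP_sub f h : CP P f -> discont h `<=` discont f -> CP P h.
Proof.
case: HP => Pc P0 PU PS Hf Hs; apply: (PS _ _ Hf); first exact: closed_closure.
exact: closureS.
Qed.

Lemma CP_op f g h : CP P f -> CP P g -> discont h `<=` discont f `|` discont g -> CP P h.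
Proof.
case: HP => Pc P0 PU PS Hf Hg Hs.
apply: (PS (closure (discont f) `|` closure (discont g))); first exact: PU.
  exact: closed_closure.
by rewrite -closureU; exact: closureS.
Qed.

Lemma CP_cst (c : RR) : CP P (fun _ => c).
Proof. by rewrite /CP /= discont_cst closure0; case: HP. Qed.

Lemma CP_B f g : CP P f -> CP P g -> CP P (f \- g).
Proof. move=> Hf Hg; apply: (CP_op Hf Hg); exact: discontB. Qed.

Lemma CP_M f g : CP P f -> CP P g -> CP P (f \* g).
Proof. move=> Hf Hg; apply: (CP_op Hf Hg); exact: discontM. Qed.

End Aux.

Lemma compact_pseudo (X : topologicalType) (P : set (set X)) :
  closed_ideal P -> tauP_compact P -> tauP_pseudocompact P.
Proof.
move=> HP Hc; rewrite /tauP_pseudocompact; apply/seteqP; split => f; last by case.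
move=> Hf; split => //; apply: contrapT => Hnb.
pose g (n : nat) := fun x => (`|f x| - n%:R) - `|(`|f x| - n%:R)|.
have Zg n : ZP (g n) = [set x | n%:R <= `|f x|].
  apply/seteqP; split => x /=; rewrite /ZP /g /=.
    by move=> /eqP; rewrite subr_eq0 eq_sym -ger0_def subr_ge0.
  by move=> H; apply/eqP; rewrite subr_eq0 eq_sym -ger0_def subr_ge0.
have CPg n : CP P (g n).
  apply: (CP_sub HP Hf) => x H Hfx; apply: H; move: Hfx.
  rewrite /prop_for /continuous_at => Hfx.
  have Hn : (fun x => `|f x| - n%:R) @ x --> (`|f x| - n%:R).
    apply: (@cvgB RR RR^o _ _ _ (fun x => `|f x|) (fun _ => n%:R)).
      exact: (@cvg_norm RR RR^o _ _ _ f _ Hfx).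
    exact: cvg_cst.
  apply: (@cvgB RR RR^o _ _ _ (fun x => `|f x| - n%:R) (fun x => `|(`|f x| - n%:R)|)) => //.
  exact: (@cvg_norm RR RR^o _ _ _ _ _ Hn).
pose F := range (fun n => ZP (g n)).
have := Hc F.
case.
- by move=> A [n _ <-]; exists (g n).
- move=> G finG GF.
  have [n Hn] : exists n : nat, [set x | n%:R <= `|f x|] `<=` \bigcap_(A in G) A.
    apply: (fin_closed (Q := fun A => exists n : nat, [set x | n%:R <= `|f x|] `<=` A)) => //.
    + by exists 0%N.
    + move=> A B [n HA] [m HB]; exists (maxn n m) => x /= Hx; split.
        by apply: HA; apply: le_trans Hx; rewrite ler_nat leq_maxl.
      by apply: HB; apply: le_trans Hx; rewrite ler_nat leq_maxr.
    + by move=> A /GF [n _ <-]; exists n; rewrite Zg.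
  apply: contrapT => Hne; apply: Hnb; exists n%:R => x; rewrite leNgt; apply/negP => Hlt.
  by apply: Hne; exists x; apply: Hn; exact: ltW.
- move=> x Hx.
  have H := archi_boundP (normr_ge0 (f x)).
  have : ZP (g (Num.Def.archi_bound `|f x|)) x by apply: Hx; exists (Num.Def.archi_bound `|f x|).
  by rewrite Zg /= leNgt H.
Qed.

Lemma compact_real (X : topologicalType) (P : set (set X)) :
  closed_ideal P -> tauP_compact P -> tauP_realcompact P.
Proof.
move=> HP Hc M [HM _]; case: HM => HI Mne Mmax; case: HI => MC M0 MB MM.
have Madd : forall f g, M f -> M g -> M (f \+ g).
  move=> f g Mf Mg.
  have -> : f \+ g = f \- ((fun _ => 0) \- g) by apply/funext => x /=; rewrite sub0r opprK.
  by apply: (MB) => //; apply: (MB).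
apply: Hc.
  by move=> A [f Mf <-]; exists f => //; exact: MC.
move=> G finG GM.
have [g [Mg Zg]] : exists g, M g /\ ZP g = \bigcap_(A in G) A.
  apply: (fin_closed (Q := fun A => exists g, M g /\ ZP g = A)) => //.
  - by exists (fun _ => 0); split => //; apply/seteqP; split => x.
  - move=> A B [g1 [M1 <-]] [g2 [M2 <-]]; exists (g1 \* g1 \+ g2 \* g2); split.
      by apply: Madd; apply: MM => //; apply: MC.
    by apply/seteqP; split => x; rewrite /ZP /= sq_sum0.
  - by move=> A /GM [f Mf <-]; exists f.
apply: contrapT => Hne.
have gnz : forall x, g x != 0.
  by move=> x; apply/eqP => H; apply: Hne; exists x; rewrite -Zg.
pose h := fun x => (g x)^-1.
have Ch : CP P h by apply: (CP_sub HP (MC _ Mg)); exact: discontV.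
have M1 : M (fun _ => 1).
  have -> : (fun _ => 1) = h \* g by apply/funext => x /=; rewrite mulVf.
  exact: MM.
apply: Mne; apply/seteqP; split => // k Hk.
have -> : k = k \* (fun _ => 1) by apply/funext => x /=; rewrite mulr1.
exact: MM.
Qed.

Lemma pseudo_real_compact (X : topologicalType) (P : set (set X)) :
  closed_ideal P -> tauP_pseudocompact P -> tauP_realcompact P -> tauP_compact P.
Proof.
move=> HP Hps Hrc F FZ Hfip.
pose G0 := [set B : set X | exists2 G : set (set X), finite_set G /\ G `<=` F & \bigcap_(A in G) A `<=` B].
have PG : ProperFilter G0.
  apply: Build_ProperFilter.
    by case=> G [fG GF] H; have [x Hx] := Hfip G fG GF; exact: H x Hx.
  apply: Build_Filter.
  - by exists set0; split => //; exact: finite_set0.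
  - move=> A B [G1 [f1 s1] h1] [G2 [f2 s2] h2]; exists (G1 `|` G2).
      by split; [rewrite finite_setU | move=> C [] ?; [apply: s1|apply: s2]].
    move=> x Hx; split; [apply: h1 | apply: h2] => C HC; apply: Hx; by [left|right].
  - move=> A B AB [G HG h]; exists G => //; exact: subset_trans h AB.
have [U [UU sU]] := ultraFilterLemma PG.
have UP : ProperFilter U by exact: ultra_proper.
have FU : F `<=` U.
  move=> A FA; apply: sU; exists [set A]; last by rewrite bigcap_set1.
  by split; [exact: finite_set1 | move=> B ->].
have haus : hausdorff_space RR by exact: (@norm_hausdorff RR RR^o).
pose phi (f : X -> RR) := lim (f @ U).
have lim_ex : forall f, CP P f -> f @ U --> phi f.
  move=> f Hf.
  have : CPstar P f by rewrite -Hps.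
  case=> _ [m Hm].
  have Hcomp := @segment_compact RR (- m) m.
  have [p [_ Hcl]] : `[- m, m] `&` cluster (f @ U) !=set0.
    apply: Hcomp; suff : U (f @^-1` `[- m, m]) by [].
    apply: filterE => x /=.
    by rewrite in_itv /= -ler_norml.
  have Hp : f @ U --> p.
    move=> N Np /=.
    case: (in_ultra_setVsetC (f @^-1` N) UU) => // HC.
    have [y [Hy1 Hy2]] := Hcl (~` N) N HC Np.
    by case: Hy1.
  by rewrite /phi (cvg_lim haus Hp).
have phi_cst : forall c : RR, phi (fun _ => c) = c.
  by move=> c; apply: (cvg_lim haus); exact: cvg_cst.
have phiB : forall f g, CP P f -> CP P g -> phi (f \- g) = phi f - phi g.
  move=> f g Hf Hg; apply: (cvg_lim haus).
  exact: (@cvgB RR RR^o _ _ _ f g _ _ (lim_ex f Hf) (lim_ex g Hg)).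
have phiD : forall f g, CP P f -> CP P g -> phi (f \+ g) = phi f + phi g.
  move=> f g Hf Hg; apply: (cvg_lim haus).
  exact: (@cvgD RR RR^o _ _ _ f g _ _ (lim_ex f Hf) (lim_ex g Hg)).
have phiM : forall f g, CP P f -> CP P g -> phi (f \* g) = phi f * phi g.
  move=> f g Hf Hg; apply: (cvg_lim haus).
  exact: (@cvgM RR _ _ _ f g _ _ (lim_ex f Hf) (lim_ex g Hg)).
pose M := [set f | CP P f /\ phi f = 0].
have MI : ring_ideal P M.
  split.
  - by move=> f [].
  - by split; [exact: CP_cst | exact: phi_cst].
  - move=> f g [Hf pf] [Hg pg]; split; first exact: CP_B.
    by rewrite phiB // pf pg subrr.
  - move=> f g Hg [Hf pf]; split; first exact: CP_M.
    by rewrite phiM // pf mulr0.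
have HM : real_maximal_ideal P M.
  split; last first.
    exists phi; split => //.
    - by move=> r; exists (fun _ => r); [exact: CP_cst | exact: phi_cst].
    - move=> f g Hf Hg; split => [[_ H]|H].
        by apply/eqP; rewrite -subr_eq0 -phiB // H.
      by split; [exact: CP_B | rewrite phiB // H subrr].
  split => //.
    move=> E; have : M (fun _ => 1) by rewrite E; exact: CP_cst.
    by case=> _; rewrite phi_cst => /eqP; rewrite oner_eq0.
  move=> J [JC J0 JB JM] MJ.
  case: (pselect (exists2 g, J g & ~ M g)) => [[g Jg Mg]|H]; last first.
    left; apply/seteqP; split => // f Jf; apply: contrapT => Mf; apply: H; by exists f.
  right; apply/seteqP; split => // k Hk.
  have Hg := JC g Jg.
  have cn0 : phi g != 0 by apply/eqP => H; apply: Mg; split.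
  have Jc : J (fun _ => phi g).
    have : J (g \- (g \- (fun _ => phi g))).
      apply: (JB) => //; apply: MJ; split; first by apply: CP_B => //; exact: CP_cst.
      by rewrite phiB ?phi_cst ?subrr //; exact: CP_cst.
    suff -> : g \- (g \- (fun _ => phi g)) = (fun _ => phi g) by [].
    by apply/funext => x /=; rewrite opprB addrC subrK.
  have J1 : J (fun _ => 1).
    have := JM (fun _ => phi g) (fun _ => (phi g)^-1) (CP_cst HP _) Jc.
    suff -> : (fun _ : X => (phi g)^-1) \* (fun _ => phi g) = (fun _ => 1) by [].
    by apply/funext => x /=; rewrite mulVf.
  have := JM (fun _ => 1) k Hk J1.
  suff -> : k \* (fun _ => 1) = k by [].
  by apply/funext => x /=; rewrite mulr1.
have [x Hx] := Hrc M HM.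
exists x => A FA.
have [f Hf Af] := FZ A FA.
rewrite -Af; apply: Hx; exists f => //; split => //.
apply: (cvg_lim haus) => N /nbhs_singleton N0 /=.
have UA : U (ZP f) by rewrite Af; exact: FU.
apply: (@filterS _ U _ (ZP f) (f @^-1` N) _ UA) => y Hy; have Hy' : f y = 0 := Hy.
by rewrite /= Hy'.
Qed.

Theorem theorem4p10 (X : topologicalType) (P : set (set X)) :
  accessible_space X -> closed_ideal P ->
  (tauP_compact P <-> tauP_pseudocompact P /\ tauP_realcompact P).
Proof.
move=> _ HP; split.
  by move=> Hc; split; [exact: compact_pseudo | exact: compact_real].
by case=> Hps Hrc; exact: pseudo_real_compact.
Qed.
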